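(* In the setting below, the group $G_M$ has the finite presentation with generators $g_0,g_1,\dots,g_{2n+1}$ and defining relations $g_ig_j=g_jg_i$ for $i,j\in\{1,\dots,2n+1\}$, and $g_0g_ig_0^{-1}=g_1^{m_{i1}}\cdots g_{2n+1}^{m_{i,2n+1}}$ for $i\in\{1,\dots,2n+1\}$.
   Context: Let $n\ge 1$ and let $M=(m_{ij})\in SL(2n+1,\mathbb Z)$. Assume that $M$ has exactly one real eigenvalue $\alpha$, that $\alpha>0$, $\alpha\neq 1$, that $\alpha$ is a simple eigenvalue, and that the remaining eigenvalues are $\beta_1,\dots,\beta_k,\bar\beta_1,\dots,\bar\beta_k$ with $\mathrm{Im}\,\beta_j>0$. Let $W\subset\mathbb C^{2n+1}$ be the direct sum of the generalized eigenspaces of $M$ for $\beta_1,\dots,\beta_k$ (so $\dim_{\mathbb C}W=n$). Fix a real eigenvector $a=(a^{(1)},\dots,a^{(2n+1)})^\top\in\mathbb R^{2n+1}$ of $M$ for $\alpha$ and a basis $b_1,\dots,b_n$ of $W$, $b_j=(b_j^{(1)},\dots,b_j^{(2n+1)})^\top$, and let $R=(r_{\ell j})\in M_n(\mathbb C)$ be given by $Mb_j=\sum_{\ell=1}^n r_{\ell j}b_\ell$. For $i=1,\dots,2n+1$ put $u_i=(a^{(i)},b_1^{(i)},\dots,b_n^{(i)})^\top\in\mathbb R\times\mathbb C^n$. Let $\mathbb H=\{w\in\mathbb C:\mathrm{Im}\,w>0\}$, and define holomorphic automorphisms of $\mathbb H\times\mathbb C^n$ by $g_0(w,z)=(\alpha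 w,R^\top z)$ and $g_i(w,z)=(w,z)+u_i$ for $1\le i\le 2n+1$. Let $G_M$ be the group generated by $g_0,\dots,g_{2n+1}$. *)

(* Defs.v *)
From HB Require Import structures.
From mathcomp Require Import all_boot all_order all_algebra.
From mathcomp Require Import reals complex.
Set Implicit Arguments. Unset Strict Implicit. Unset Printing Implicit Defensive.
Import Order.TTheory GRing.Theory Num.Theory.
Local Open Scope ring_scope.

Definition Ndim (n : nat) : nat := (n.*2).+1.

(* Generators g_0, ..., g_{2n+1} are indexed by 'I_(2n+2): index 0 is g_0,
   index (lift ord0 j) (value j+1) is g_{j+1}, j : 'I_(2n+1). *)
Definition gen (n : nat) := 'I_(Ndim n).+1.
(* a letter is a generator together with a flag "inverse" *)
Definition letter (n : nat) := (gen n * bool)%type.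
Definition word (n : nat) := seq (letter n).

(* Points of C x C^n (the domain H x C^n is the part with Im w > 0). *)
Definition point (R : realType) (n : nat) := (R[i] * 'cV[R[i]]_n)%type.

Definition letter_act (R : realType) (n : nat) (alpha : R)
  (Rm : 'M[R[i]]_n) (a : 'cV[R]_(Ndim n)) (B : 'M[R[i]]_(Ndim n, n))
  (x : letter n) (p : point R n) : point R n :=
  match unlift ord0 x.1 with
  | None =>
      if x.2 then ((p.1 / (alpha%:C)%C), invmx (Rm^T) *m p.2)
      else (((alpha%:C)%C * p.1), Rm^T *m p.2)
  | Some j =>
      let s : R[i] := if x.2 then -1 else 1 in
      (p.1 + s * ((a j 0)%:C)%C, p.2 + s *: (row j B)^T)
  end.

(* The element of G_M represented by a word [x1; ...; xk] is x1 o ... o xk. *)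
Definition word_act (R : realType) (n : nat) (alpha : R)
  (Rm : 'M[R[i]]_n) (a : 'cV[R]_(Ndim n)) (B : 'M[R[i]]_(Ndim n, n))
  (w : word n) : point R n -> point R n :=
  foldr (fun x f => letter_act alpha Rm a B x \o f) id w.

Definition gpow (n : nat) (g : gen n) (m : int) : word n :=
  nseq `|m|%N (g, m < 0).

Definition pres_rel (n : nat) (M : 'M[int]_(Ndim n)) (l r : word n) : Prop :=
  (exists j k : 'I_(Ndim n),
      l = [:: (lift ord0 j, false); (lift ord0 k, false)] /\
      r = [:: (lift ord0 k, false); (lift ord0 j, false)])
  \/
  (exists j : 'I_(Ndim n),
      l = [:: (ord0, false); (lift ord0 j, false); (ord0, true)] /\
      r = flatten [seq gpow (lift ord0 k) (M j k) | k <- enum 'I_(Ndim n)]).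

Definition inv_letter (n : nat) (x : letter n) : letter n := (x.1, ~~ x.2).

(* Equality of words in the group presented by the generators and pres_rel:
   the congruence on words generated by free cancellation and the relations. *)
Inductive pres_eq (n : nat) (M : 'M[int]_(Ndim n)) : word n -> word n -> Prop :=
  | pres_refl u : pres_eq M u u
  | pres_sym u v : pres_eq M u v -> pres_eq M v u
  | pres_trans u v w : pres_eq M u v -> pres_eq M v w -> pres_eq M u w
  | pres_cancel u v x : pres_eq M (u ++ [:: x; inv_letter x] ++ v) (u ++ v)
  | pres_relator u v l r : pres_rel M l r -> pres_eq M (u ++ l ++ v) (u ++ r ++ v).

Definition inW (R : realType) (n : nat) (A : 'M[R[i]]_(Ndim n))
  (v : 'cV[R[i]]_(Ndim n)) : Prop :=
  exists s : seq (R[i] * 'cV[R[i]]_(Ndim n)),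
    (forall p, p \in s -> 0 < complex.Im p.1 /\
        (A - p.1%:M) ^+ (Ndim n) *m p.2 = 0) /\
    v = \sum_(p <- s) p.2.

(* Main.v *)
Require Import Defs.
From HB Require Import structures.
From mathcomp Require Import all_boot all_order all_algebra.
From mathcomp Require Import reals complex.
From mathcomp Require Import zify.
Set Implicit Arguments. Unset Strict Implicit. Unset Printing Implicit Defensive.
Import Order.TTheory GRing.Theory Num.Theory.
Local Open Scope ring_scope.

Section Comb.
Variables (n : nat) (M : 'M[int]_(Ndim n)).
Local Notation N := (Ndim n).
Local Notation "u ~~> v" := (pres_eq M u v) (at level 70).

Definition G0 : letter n := (ord0, false).
Definition Gi : letter n := (ord0, true).
Definition gk (k : 'I_N) : gen n := lift ord0 k.

Lemma pe_ctx p s u v : u ~~> v -> p ++ u ++ s ~~> p ++ v ++ s.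
Proof.
elim=> {u v}.
- by move=> u; apply: pres_refl.
- by move=> u v _ H; apply: pres_sym.
- by move=> u v w _ H1 _ H2; apply: pres_trans H2.
- move=> u v x; have := pres_cancel M (p ++ u) (v ++ s) x.
  by rewrite -!catA.
- move=> u v l r H; have := pres_relator (p ++ u) (v ++ s) H.
  by rewrite -!catA.
Qed.

Lemma pe_cat u u' v v' : u ~~> u' -> v ~~> v' -> u ++ v ~~> u' ++ v'.
Proof.
move=> H1 H2; apply: (@pres_trans _ _ _ (u' ++ v)).
  by have := pe_ctx [::] v H1.
by have := pe_ctx u' [::] H2; rewrite !cats0.
Qed.

Lemma pe_cons x u v : u ~~> v -> x :: u ~~> x :: v.
Proof. by move=> H; have := pe_cat (pres_refl M [:: x]) H. Qed.

Lemma inv_letterK : involutive (@inv_letter n).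
Proof. by case=> g b; rewrite /inv_letter /= negbK. Qed.

Lemma pe_canc u v x : u ++ x :: inv_letter x :: v ~~> u ++ v.
Proof. exact: pres_cancel. Qed.

Lemma pe_canc' u v x : u ++ inv_letter x :: x :: v ~~> u ++ v.
Proof. by have := pres_cancel M u v (inv_letter x); rewrite inv_letterK. Qed.

Lemma comm_pos j k u v :
  u ++ (gk j, false) :: (gk k, false) :: v ~~> u ++ (gk k, false) :: (gk j, false) :: v.
Proof.
have H : pres_rel M [:: (gk j, false); (gk k, false)] [:: (gk k, false); (gk j, false)].
  by left; exists j, k.
exact: (pres_relator u v H).
Qed.

Lemma pe_trans' v u w : u ~~> v -> v ~~> w -> u ~~> w.
Proof. by move=> H1 H2; apply: pres_trans H1 H2. Qed.

Lemma comm_tt j k b c :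
  [:: (gk j, b); (gk k, c)] ~~> [:: (gk k, c); (gk j, b)].
Proof.
have H1 : forall j k, [:: (gk j, true); (gk k, false)] ~~> [:: (gk k, false); (gk j, true)].
  move=> j' k'.
  apply: (pe_trans' (v := [:: (gk j', true); (gk k', false); (gk j', false); (gk j', true)])).
    by apply: pres_sym; have := pe_canc [:: (gk j', true); (gk k', false)] [::] (gk j', false).
  apply: (pe_trans' (v := [:: (gk j', true); (gk j', false); (gk k', false); (gk j', true)])).
    by have := comm_pos k' j' [:: (gk j', true)] [:: (gk j', true)].
  by have := pe_canc [::] [:: (gk k', false); (gk j', true)] (gk j', true).
case: b; case: c.
- apply: (pe_trans' (v := [:: (gk k, true); (gk k, false); (gk j, true); (gk k, true)])).
    by apply: pres_sym; have := pe_canc' [::] [:: (gk j, true); (gk k, true)] (gk k, false).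
  apply: (pe_trans' (v := [:: (gk k, true); (gk j, true); (gk k, false); (gk k, true)])).
    by apply: pres_sym; have := pe_ctx [:: (gk k, true)] [:: (gk k, true)] (H1 j k).
  by have := pe_canc [:: (gk k, true); (gk j, true)] [::] (gk k, false).
- exact: H1.
- apply: pres_sym; exact: H1.
- by have := comm_pos j k [::] [::].
Qed.

Lemma comm_nseq j b k c l :
  (gk j, b) :: nseq l (gk k, c) ~~> nseq l (gk k, c) ++ [:: (gk j, b)].
Proof.
elim: l => [|l IH] /=; first exact: pres_refl.
apply: (pe_trans' (v := (gk k, c) :: (gk j, b) :: nseq l (gk k, c))).
  by have := pe_cat (comm_tt j k b c) (pres_refl M (nseq l (gk k, c))).
exact: pe_cons.
Qed.

Definition gpowP (g : gen n) (l : nat) : gpow g (Posz l) = nseq l (g, false).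
Proof. by []. Qed.

Lemma gpowN (g : gen n) (l : nat) : gpow g (- Posz l) = nseq l (g, true).
Proof. by case: l. Qed.

Definition sgb (b : bool) : int := if b then -1 else 1.

Lemma merge j b m :
  (gk j, b) :: gpow (gk j) m ~~> gpow (gk j) (m + sgb b).
Proof.
case: m => l; last rewrite NegzE.
- case: b => /=.
  + case: l => [|l].
      by rewrite add0r; apply: pres_refl.
    have -> : Posz l.+1 + -1 = Posz l by rewrite -addn1 PoszD addrK.
    by rewrite gpowP /=; have := pe_canc [::] (nseq l (gk j, false)) (gk j, true).
  + have -> : Posz l + 1 = Posz l.+1 by rewrite -addn1 PoszD.
    by rewrite !gpowP; apply: pres_refl.
- case: b => /=.
  + have -> : - Posz l.+1 + -1 = - Posz l.+2.
      by rewrite -opprD -[in RHS]addn1 PoszD.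
    by rewrite !gpowN; apply: pres_refl.
  + have -> : - Posz l.+1 + 1 = - Posz l.
      by rewrite -[l.+1]addn1 PoszD opprD addrNK.
    by rewrite !gpowN /=; have := pe_canc [::] (nseq l (gk j, true)) (gk j, false).
Qed.


Definition tw (s : seq 'I_N) (t : 'rV[int]_N) : word n :=
  flatten [seq gpow (gk k) (t 0 k) | k <- s].
Definition tnf t := tw (enum 'I_N) t.

Lemma eq_tw (s : seq 'I_N) (t t' : 'rV[int]_N) : {in s, forall k, t 0 k = t' 0 k} -> tw s t = tw s t'.
Proof. by move=> H; rewrite /tw; congr flatten; apply/eq_in_map => k /H ->. Qed.

Lemma twE k (s : seq 'I_N) t : tw (k :: s) t = gpow (gk k) (t 0 k) ++ tw s t.
Proof. by []. Qed.

Lemma tw_cons j b (s : seq 'I_N) (t : 'rV[int]_N) : uniq s -> j \in s ->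
  (gk j, b) :: tw s t ~~> tw s (t + sgb b *: 'e_j).
Proof.
elim: s => [|k s IH] //= /andP [ks us].
rewrite in_cons !twE; case/orP => [/eqP ->|js].
- apply: (pe_trans' (v := gpow (gk k) (t 0 k + sgb b) ++ tw s t)).
    by have := pe_cat (merge k b (t 0 k)) (pres_refl M (tw s t)).
  rewrite !mxE !eqxx /= mulr1 (@eq_tw s _ t); first exact: pres_refl.
  move=> k' k's; rewrite !mxE /=; case: eqP => [E|]; last by rewrite mulr0 addr0.
  by move: ks; rewrite -E k's.
- have kj : k != j by apply/eqP => E; move: ks; rewrite E js.
  apply: (pe_trans' (v := gpow (gk k) (t 0 k) ++ (gk j, b) :: tw s t)).
    have := pe_cat (comm_nseq j b k (t 0 k < 0) (absz (t 0 k))) (pres_refl M (tw s t)).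
    by rewrite -catA.
  rewrite !mxE /= (negbTE kj) mulr0 addr0.
  by have := pe_cat (pres_refl M (gpow (gk k) (t 0 k))) (IH us js).
Qed.

Definition lvec (x : letter n) : 'rV[int]_N :=
  if unlift ord0 x.1 is Some k then sgb x.2 *: 'e_k else 0.
Definition wvec (w : word n) : 'rV[int]_N := \sum_(x <- w) lvec x.
Definition istw (w : word n) := all (fun x : letter n => x.1 != ord0) w.

Lemma lvec_gk j b : lvec (gk j, b) = sgb b *: 'e_j.
Proof. by rewrite /lvec /= /gk liftK. Qed.

Lemma tr_letter (x : letter n) : x.1 != ord0 -> exists j, x = (gk j, x.2).
Proof.
case: x => g b /= H; rewrite eq_sym in H; have [j -> _] := unlift_some (H : ord0 != g).
by exists j.
Qed.

Lemma tnf_cons x t : x.1 != ord0 -> x :: tnf t ~~> tnf (lvec x + t).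
Proof.
move=> /tr_letter [j ->]; rewrite lvec_gk addrC.
by apply: tw_cons; rewrite ?enum_uniq ?mem_enum.
Qed.

Lemma tnf_cat w t : istw w -> w ++ tnf t ~~> tnf (wvec w + t).
Proof.
elim: w t => [|x w IH] t /=; first by rewrite /wvec big_nil add0r => _; apply: pres_refl.
move=> /andP [Hx Hw].
apply: (pe_trans' (v := x :: tnf (wvec w + t))); first exact/pe_cons/IH.
by rewrite /wvec big_cons -addrA; apply: tnf_cons.
Qed.

Lemma istw_gpow j m : istw (gpow (gk j) m).
Proof. by rewrite /istw /gpow; apply/allP => x /nseqP [-> _] /=; exact: (neq_lift ord0 j). Qed.

Lemma istw_tw s t : istw (tw s t).
Proof.
elim: s => [|k s IH] //=; rewrite /istw all_cat; apply/andP; split => //.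
exact: istw_gpow.
Qed.

Lemma istw_tnf t : istw (tnf t).
Proof. exact: istw_tw. Qed.

Lemma wvec_cat u v : wvec (u ++ v) = wvec u + wvec v.
Proof. by rewrite /wvec big_cat. Qed.

Lemma wvec_gpow j m : wvec (gpow (gk j) m) = m *: 'e_j.
Proof.
rewrite /wvec /gpow big_nseq lvec_gk /=.
case: m => l; last rewrite NegzE.
- by rewrite /sgb /=; elim: l => [|l IH] /=; rewrite ?scale0r // IH -[l.+1]addn1 PoszD scalerDl scale1r addrC.
- rewrite /sgb /=; elim: l => [|l IH] /=; first by rewrite addr0 scaleN1r.
  by rewrite IH -[l.+2]addn1 PoszD opprD scalerDl scaleN1r addrC.
Qed.

Lemma wvec_tw s t : wvec (tw s t) = \sum_(k <- s) t 0 k *: 'e_k.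
Proof.
elim: s => [|k s IH] /=; first by rewrite big_nil /wvec big_nil.
by rewrite wvec_cat IH big_cons wvec_gpow.
Qed.

Lemma wvec_tnf t : wvec (tnf t) = t.
Proof. by rewrite /tnf wvec_tw big_enum /= [RHS]row_sum_delta. Qed.

Lemma tnf0 : tnf 0 = [::].
Proof. rewrite /tnf /tw; elim: (enum _) => //= k s ->; by rewrite mxE. Qed.

Lemma tnf_tw w : istw w -> w ~~> tnf (wvec w).
Proof.
move=> Hw; have := tnf_cat (0 : 'rV[int]_N) Hw; rewrite addr0.
by rewrite tnf0 cats0.
Qed.

Lemma tnf_add t s : tnf t ++ tnf s ~~> tnf (t + s).
Proof. by have := tnf_cat s (istw_tnf t); rewrite wvec_tnf. Qed.


Lemma rel_conj j : [:: G0; (gk j, false); Gi] ~~> tnf (row j M).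
Proof.
have H : pres_rel M [:: G0; (gk j, false); Gi] (tnf (row j M)).
  right; exists j; split => //; rewrite /tnf /tw; congr flatten.
  by apply/eq_map => k; rewrite mxE.
by have := pres_relator [::] [::] H; rewrite /= cats0.
Qed.

Lemma g0_pos j : [:: G0; (gk j, false)] ~~> tnf (row j M) ++ [:: G0].
Proof.
apply: (pe_trans' (v := [:: G0; (gk j, false); Gi; G0])).
  by apply: pres_sym; have := pe_canc [:: G0; (gk j, false)] [::] Gi; rewrite cats0.
by have := pe_cat (rel_conj j) (pres_refl M [:: G0]).
Qed.

Lemma g0_letter x : x.1 != ord0 -> [:: G0; x] ~~> tnf (lvec x *m M) ++ [:: G0].
Proof.
move=> /tr_letter [j ->]; rewrite lvec_gk -scalemxAl -rowE.
case: x.2 => /=; last by rewrite scale1r; apply: g0_pos.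
rewrite scaleN1r.
apply: (pe_trans' (v := (tnf (- row j M) ++ tnf (row j M)) ++ [:: G0; (gk j, true)])).
  apply: pres_sym; have := pe_cat (tnf_add (- row j M) (row j M)) (pres_refl M [:: G0; (gk j, true)]).
  by rewrite addNr tnf0.
apply: (pe_trans' (v := tnf (- row j M) ++ [:: G0; (gk j, false)] ++ [:: (gk j, true)])).
  have := pe_cat (pres_refl M (tnf (- row j M))) (pe_cat (pres_sym (g0_pos j)) (pres_refl M [:: (gk j, true)])).
  by rewrite -!catA /=.
by have := pe_canc (tnf (- row j M) ++ [:: G0]) [::] (gk j, false); rewrite -!catA /=.
Qed.

Lemma g0_tw w : istw w -> G0 :: w ~~> tnf (wvec w *m M) ++ [:: G0].
Proof.
elim: w => [|x w IH] /=; first by rewrite /wvec big_nil mul0mx tnf0 => _; apply: pres_refl.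
case/andP => Hx Hw.
apply: (pe_trans' (v := (tnf (lvec x *m M) ++ [:: G0]) ++ w)).
  by have := pe_cat (g0_letter Hx) (pres_refl M w).
apply: (pe_trans' (v := tnf (lvec x *m M) ++ (tnf (wvec w *m M) ++ [:: G0]))).
  by rewrite -catA; apply: pe_cat; [apply: pres_refl | apply: IH].
rewrite catA /wvec big_cons mulmxDl.
by apply: pe_cat; [apply: tnf_add | apply: pres_refl].
Qed.

Lemma tw_gi w : istw w -> w ++ [:: Gi] ~~> Gi :: tnf (wvec w *m M).
Proof.
move=> Hw.
apply: (pe_trans' (v := Gi :: G0 :: w ++ [:: Gi])).
  by apply: pres_sym; have := pe_canc [::] (w ++ [:: Gi]) Gi.
apply: pe_cons.
apply: (pe_trans' (v := (tnf (wvec w *m M) ++ [:: G0]) ++ [:: Gi])).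
  by have := pe_cat (g0_tw Hw) (pres_refl M [:: Gi]).
by have := pe_canc (tnf (wvec w *m M)) [::] G0; rewrite -catA cats0.
Qed.

Lemma tw_gin w p : istw w -> w ++ nseq p Gi ~~> nseq p Gi ++ tnf (wvec w *m M ^+ p).
Proof.
elim: p w => [|p IH] w Hw.
  by rewrite /= cats0 expr0 mulmx1; apply: tnf_tw.
rewrite [nseq p.+1 Gi]/= -cat1s catA.
apply: (pe_trans' (v := (Gi :: tnf (wvec w *m M)) ++ nseq p Gi)).
  by apply: pe_cat; [apply: tw_gi | apply: pres_refl].
rewrite /=; apply: pe_cons.
have := IH _ (istw_tnf (wvec w *m M)); rewrite wvec_tnf -mulmxA exprS mulmxE.
done.
Qed.

Definition NF p t q := nseq p Gi ++ tnf t ++ nseq q G0.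

Lemma nf_exists u : exists p t q, u ~~> NF p t q.
Proof.
elim: u => [|x u [p [t [q IH]]]].
  by exists 0%N, 0, 0%N; rewrite /NF tnf0; apply: pres_refl.
have H1 := pe_cons x IH; clear IH.
case: x H1 => g b H1.
case: (eqVneq g ord0) => [Eg|Hg].
- subst g; case: b H1 => H1.
    by exists p.+1, t, q.
  case: p H1 => [|p] H1.
  + exists 0%N, (t *m M), q.+1; apply: pe_trans' H1 _.
    have := pe_cat (g0_tw (istw_tnf t)) (pres_refl M (nseq q G0)).
    by rewrite /NF /= wvec_tnf -catA.
  + exists p, t, q; apply: pe_trans' H1 _.
    by have := pe_canc [::] (NF p t q) G0.
- exists p, (lvec (g, b) *m M ^+ p + t), q; apply: pe_trans' H1 _.
  have Hw : istw [:: (g, b)] by rewrite /istw /= Hg.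
  have := pe_cat (tw_gin p Hw) (pres_refl M (tnf t ++ nseq q G0)).
  rewrite /wvec big_seq1 -catA /NF => H2; apply: pe_trans' H2 _.
  rewrite -catA; apply: pe_cat; first exact: pres_refl.
  rewrite catA; apply: pe_cat; [apply: tnf_add | apply: pres_refl].
Qed.

Lemma nseqSr (x : letter n) p : nseq p.+1 x = nseq p x ++ [:: x].
Proof. by elim: p => //= p <-. Qed.

Lemma nf_shift p t q : NF p t q ~~> NF p.+1 (t *m M) q.+1.
Proof.
apply: (pe_trans' (v := nseq p Gi ++ Gi :: G0 :: tnf t ++ nseq q G0)).
  by apply: pres_sym; have := pe_canc (nseq p Gi) (tnf t ++ nseq q G0) Gi.
rewrite /NF nseqSr -catA /=; apply: pe_cat; first exact: pres_refl.
apply: pe_cons.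
have := pe_cat (g0_tw (istw_tnf t)) (pres_refl M (nseq q G0)).
by rewrite wvec_tnf -catA.
Qed.

Lemma nf_shiftk k p t q : NF p t q ~~> NF (p + k) (t *m M ^+ k) (q + k).
Proof.
elim: k => [|k IH]; first by rewrite !addn0 expr0 mulmx1; apply: pres_refl.
apply: pe_trans' IH _.
by rewrite !addnS exprSr -mulmxE mulmxA; apply: nf_shift.
Qed.

Lemma nseq_inv p : nseq p G0 ++ nseq p Gi ~~> [::].
Proof.
elim: p => [|p IH]; first exact: pres_refl.
rewrite nseqSr /= -catA /=.
apply: pe_trans' IH.
exact: pe_canc.
Qed.

End Comb.

Section Sem.
Variables (R : realType) (n : nat) (M : 'M[int]_(Ndim n)).
Variables (alpha : R) (a : 'cV[R]_(Ndim n)) (B : 'M[R[i]]_(Ndim n, n)) (Rm : 'M[R[i]]_n).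
Local Notation N := (Ndim n).
Local Notation "u ~~> v" := (pres_eq M u v) (at level 70).
Local Notation act := (word_act alpha Rm a B).

Lemma act_cat u v p : act (u ++ v) p = act u (act v p).
Proof.
rewrite /word_act foldr_cat; elim: u => //= x u IH.
by rewrite IH.
Qed.

Definition tr1 (t : 'rV[int]_N) : R[i] := ((map_mx intr t *m a) 0 0)%:C%C.
Definition tr2 (t : 'rV[int]_N) : 'cV[R[i]]_n := (map_mx intr t *m B)^T.

Lemma tr1D t s : tr1 (t + s) = tr1 t + tr1 s.
Proof. by rewrite /tr1 map_mxD mulmxDl mxE rmorphD. Qed.
Lemma tr2D t s : tr2 (t + s) = tr2 t + tr2 s.
Proof. by rewrite /tr2 map_mxD mulmxDl linearD. Qed.
Lemma tr10 : tr1 0 = 0.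
Proof. by rewrite /tr1 map_mx0 mul0mx mxE. Qed.
Lemma tr20 : tr2 0 = 0.
Proof. by rewrite /tr2 map_mx0 mul0mx trmx0. Qed.

Definition sgc (b : bool) : R[i] := if b then -1 else 1.

Lemma tr1e j b : tr1 (sgb b *: 'e_j) = sgc b * ((a j 0)%:C)%C.
Proof.
rewrite /tr1 map_mxZ map_delta_mx -scalemxAl -rowE !mxE rmorphM /=.
by case: b => /=; rewrite ?rmorphN rmorph1.
Qed.

Lemma tr2e j b : tr2 (sgb b *: 'e_j) = sgc b *: (row j B)^T.
Proof.
rewrite /tr2 map_mxZ map_delta_mx -scalemxAl -rowE linearZ /=.
by case: b => /=; rewrite ?rmorphN rmorph1.
Qed.

Lemma act_tw w p : istw w -> act w p = (p.1 + tr1 (wvec w), p.2 + tr2 (wvec w)).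
Proof.
elim: w => [|x w IH] /=.
  by rewrite /wvec big_nil tr10 tr20 !addr0; case: p.
case/andP => /tr_letter [j Ex] Hw.
rewrite [word_act _ _ _ _ _]/= IH // {1}Ex /letter_act /= /gk liftK /=.
rewrite /wvec big_cons Ex lvec_gk -/(wvec w) tr1D tr2D tr1e tr2e.
by congr pair; rewrite -addrA [X in _ + X]addrC.
Qed.


Hypothesis Ha0 : alpha != 0.
Hypothesis HU : Rm^T \in unitmx.
Hypothesis Hma : map_mx (fun x : int => x%:~R : R) M *m a = alpha *: a.
Hypothesis HMB : map_mx (fun x : int => x%:~R : R[i]) M *m B = B *m Rm.

Lemma alphaC0 : (alpha%:C)%C != 0.
Proof. by rewrite (inj_eq (@complexI _)). Qed.

Lemma letter_inv x q : letter_act alpha Rm a B x (letter_act alpha Rm a B (inv_letter x) q) = q.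
Proof.
case: x => g b; case: q => q1 q2; rewrite /letter_act /inv_letter /=.
case: (unlift ord0 g) => [j|] /=.
  by case: b => /=; rewrite ?mulN1r ?mul1r ?scaleN1r ?scale1r ?opprK ?addrK ?addrNK.
case: b => /=.
  by rewrite mulmxA mulVmx // mul1mx mulrC mulKf // alphaC0.
by rewrite mulmxA mulmxV // mul1mx mulrC mulfVK // alphaC0.
Qed.

Lemma act_G0 q : letter_act alpha Rm a B (G0 n) q = ((alpha%:C)%C * q.1, Rm^T *m q.2).
Proof. by rewrite /letter_act /= unlift_none. Qed.
Lemma act_Gi q : letter_act alpha Rm a B (Gi n) q = (q.1 / (alpha%:C)%C, invmx Rm^T *m q.2).
Proof. by rewrite /letter_act /= unlift_none. Qed.

Lemma act_rel l r q : pres_rel M l r -> act l q = act r q.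
Proof.
case=> [[j [k [-> ->]]]|[j [-> ->]]].
  rewrite !act_tw /istw /= ?neq_lift //.
  by rewrite /wvec !big_cons !big_nil !addr0 [lvec _ + _]addrC.
have -> : flatten [seq gpow (lift ord0 k) (M j k) | k <- enum 'I_N] = tnf (row j M).
  by rewrite /tnf /tw; congr flatten; apply/eq_map => k; rewrite mxE.
rewrite [act (tnf _) _]act_tw ?istw_tnf // wvec_tnf /=.
rewrite /word_act /= /letter_act liftK unlift_none /= mul1r scale1r.
congr pair.
  rewrite mulrDr mulrC mulfVK ?alphaC0 //; congr (_ + _).
  rewrite /tr1 map_row -row_mul.
  have -> : map_mx intr M *m a = alpha *: a by exact: Hma.
  by rewrite !mxE rmorphM.
rewrite mulmxDr mulmxA mulmxV // mul1mx; congr (_ + _).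
rewrite /tr2 map_row -row_mul.
have -> : map_mx intr M *m B = B *m Rm by exact: HMB.
by rewrite row_mul trmx_mul.
Qed.

Lemma sound u v : u ~~> v -> forall q, act u q = act v q.
Proof.
elim=> {u v}.
- by [].
- by move=> u v _ H q; rewrite H.
- by move=> u v w _ H1 _ H2 q; rewrite H1 H2.
- move=> u v x q; rewrite !act_cat; congr (act u _).
  by rewrite /word_act /= letter_inv.
- by move=> u v l r H q; rewrite !act_cat (act_rel _ H).
Qed.

Lemma act_G0n Q q : act (nseq Q (G0 n)) q = (((alpha%:C)%C ^+ Q) * q.1, (Rm^T ^+ Q) *m q.2).
Proof.
elim: Q => [|Q IH]; first by rewrite /= expr0 mul1r mul1mx; case: q.
rewrite [act _ _]/= -/(act _ _) IH act_G0 /= mulrA -exprS mulmxA.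
by congr pair; rewrite [in RHS]exprS.
Qed.

End Sem.

Section Eig.
Variables (F : fieldType) (n : nat).

Lemma char_poly_conj (P A : 'M[F]_n) : P \in unitmx ->
  char_poly (P *m A *m invmx P) = char_poly A.
Proof.
move=> HP.
have E : char_poly_mx (P *m A *m invmx P) =
   map_mx polyC P *m char_poly_mx A *m map_mx polyC (invmx P).
  rewrite /char_poly_mx !map_mxM mulmxBr mulmxBl mul_mx_scalar -scalemxAl.
  by rewrite -(map_mxM polyC P (invmx P)) mulmxV // map_mx1 scalemx1.
rewrite /char_poly E !det_mulmx !det_map_mx mulrC mulrA -rmorphM.
by rewrite -det_mulmx mulVmx // det1 rmorph1 mul1r.
Qed.

Lemma eig_rank_dvd (A : 'M[F]_n) (l : F) :
  ('X - l%:P) ^+ \rank (eigenspace A l) %| char_poly A.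
Proof.
set V := eigenspace A l; set r := \rank V; set P := row_ebase V.
have HP : P \in unitmx by apply: row_ebase_unit.
have HPV : ((pid_mx r : 'M_n) *m P <= V)%MS.
  have E : (pid_mx r : 'M_n) *m P = invmx (col_ebase V) *m V.
    by set C := col_ebase V; rewrite -{1}(mulmx_ebase V) -/C !mulmxA mulVmx ?col_ebase_unit // mul1mx.
  by rewrite E submxMl.
have Hrow : forall i : 'I_n, (i < r)%N -> row i P *m A = l *: row i P.
  move=> i ir; apply/eigenspaceP.
  have -> : row i P = row i ((pid_mx r : 'M_n) *m P).
    rewrite row_mul; have -> : row i (pid_mx r : 'M[F]_n) = row i 1%:M.
      by apply/matrixP => ? j; rewrite !mxE ir andbT.
    by rewrite -row_mul mul1mx.
  exact: submx_trans (row_sub _ _) HPV.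
set T := P *m A *m invmx P.
have HT : forall i j : 'I_n, (i < r)%N -> T i j = l * (i == j)%:R.
  move=> i j ir.
  have : row i T = l *: row i 1%:M.
    by rewrite /T !row_mul Hrow // -scalemxAl -row_mul mulmxV.
  move/rowP/(_ j); rewrite !mxE.
  by [].
rewrite -(char_poly_conj A HP) -/T.
set d : 'rV[{poly F}]_n := \row_i (if (i < r)%N then 'X - l%:P else 1).
set Q : 'M[{poly F}]_n := \matrix_(i, j) (if (i < r)%N then (i == j)%:R else char_poly_mx T i j).
have -> : char_poly T = \det (diag_mx d) * \det Q.
  rewrite -det_mulmx mul_diag_mx /char_poly; congr (\det _).
  apply/matrixP => i j; rewrite !mxE.
  case: ifP => ir; last by rewrite mul1r.
  have HT' := HT i j ir; rewrite !mxE in HT'; rewrite HT' rmorphM /=.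
  by case: eqP => _; rewrite ?mulr1 ?mulr0 ?mul1r /= ?rmorph1 ?rmorph0 ?mulr1n ?mulr0n ?subr0.
apply: dvdp_mulr.
rewrite det_diag.
have rn : (r <= n)%N by rewrite /r rank_leq_col.
rewrite (bigID (fun i : 'I_n => (i < r)%N)) /=.
rewrite [X in _ * X]big1 ?mulr1; last by move=> i /negbTE ir; rewrite mxE ir.
rewrite (eq_bigr (fun _ => 'X - l%:P)); last by move=> i ir; rewrite mxE ir.
rewrite -(big_ord_widen _ (fun _ => 'X - l%:P) rn) prodr_const card_ord.
exact: dvdpp.
Qed.

End Eig.

Lemma char_poly_tr (F : fieldType) n (A : 'M[F]_n) : char_poly A^T = char_poly A.
Proof.
rewrite /char_poly -det_tr; congr (\det _).
by rewrite /char_poly_mx; apply/matrixP => i j; rewrite !mxE eq_sym.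
Qed.

Lemma left_eig_horner (F : fieldType) k (A : 'M[F]_k.+1) (y : 'rV_k.+1) l (q : {poly F}) :
  y *m A = l *: y -> y *m horner_mx A q = q.[l] *: y.
Proof.
move=> Hy; elim/poly_ind: q => [|q c IH].
  by rewrite rmorph0 mulmx0 horner0 scale0r.
rewrite rmorphD rmorphM /= horner_mx_X horner_mx_C hornerMXaddC.
rewrite mulmxDr -mulmxE mulmxA IH -scalemxAl Hy scalerA mul_mx_scalar scalerDl.
by [].
Qed.

Lemma map_mxXn (aR rR : comNzRingType) (f : {rmorphism aR -> rR}) k (A : 'M[aR]_k.+1) e :
  map_mx f (A ^+ e) = (map_mx f A) ^+ e.
Proof.
elim: e => [|e IH]; first by rewrite !expr0 map_mx1.
by rewrite !exprS -!mulmxE map_mxM IH.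
Qed.

Section Spec.
Variables (R : realType) (n : nat) (M : 'M[int]_(Ndim n)).
Variables (alpha : R) (a : 'cV[R]_(Ndim n)) (B : 'M[R[i]]_(Ndim n, n)) (Rm : 'M[R[i]]_n).
Local Notation N := (Ndim n).
Local Notation Mc := (map_mx (fun x : int => x%:~R : R[i]) M).

Hypothesis Hs : ~~ ((('X - ((alpha%:C)%C)%:P) ^+ 2) %| char_poly Mc).
Hypothesis Hreal : forall l : R[i], root (char_poly Mc) l -> complex.Im l = 0 -> l = (alpha%:C)%C.
Hypothesis Ha : a != 0.
Hypothesis Hma : map_mx (fun x : int => x%:~R : R) M *m a = alpha *: a.
Hypothesis HWB : forall v, inW Mc v -> exists c : 'cV[R[i]]_n, v = B *m c.
Hypothesis HMB : Mc *m B = B *m Rm.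

Local Notation ac := (map_mx (real_complex R) a).
Local Notation Bc := (map_mx (@conjc R) B).

Lemma Mc_ac : Mc *m ac = (alpha%:C)%C *: ac.
Proof.
have -> : Mc = map_mx (real_complex R) (map_mx (fun x : int => x%:~R : R) M).
  by apply/matrixP => i j; rewrite !mxE rmorph_int.
by rewrite -map_mxM Hma map_mxZ.
Qed.

Lemma Mc_real : map_mx (@conjc R) Mc = Mc.
Proof. by apply/matrixP => i j; rewrite !mxE rmorph_int. Qed.

Lemma Mc_Bc : Mc *m Bc = Bc *m map_mx (@conjc R) Rm.
Proof. by rewrite -{1}Mc_real -!map_mxM HMB. Qed.

Lemma conjK_mx m k (A : 'M[R[i]]_(m, k)) : map_mx (@conjc R) (map_mx (@conjc R) A) = A.
Proof. by apply/matrixP => i j; rewrite !mxE conjcK. Qed.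

Lemma right_eig v : Mc *m v = (alpha%:C)%C *: v -> exists s, v = s *: ac.
Proof.
move=> Hv.
set V := eigenspace Mc^T (alpha%:C)%C.
have rV : (\rank V <= 1)%N.
  rewrite leqNgt; apply/negP => r2; move: Hs; apply/negP; rewrite negbK.
  apply: dvdp_trans (dvdp_exp2l _ r2) _.
  by rewrite -(char_poly_tr Mc); apply: eig_rank_dvd.
have acV : (ac^T <= V)%MS by apply/eigenspaceP; rewrite -trmx_mul Mc_ac linearZ.
have vV : (v^T <= V)%MS by apply/eigenspaceP; rewrite -trmx_mul Hv linearZ.
have ac0 : ac^T != 0 by rewrite trmx_eq0 map_mx_eq0.
have Vac : (V <= ac^T)%MS.
  rewrite -(geq_leqif (mxrank_leqif_sup acV)) rank_rV ac0.
  exact: rV.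
have [s Es] := sub_rVP (submx_trans vV Vac).
by exists s; apply: trmx_inj; rewrite Es linearZ.
Qed.


Lemma y_zero (y : 'rV[R[i]]_N) l : y *m Mc = l *: y ->
  y *m ac = 0 -> y *m B = 0 -> y *m Bc = 0 -> y = 0.
Proof.
move=> Hy yac yB yBc.
suff Hv : forall v : 'cV[R[i]]_N, y *m v = 0.
  apply/matrixP => i j; have := Hv (delta_mx j 0).
  rewrite -colE => /matrixP /(_ 0 0); rewrite !mxE (ord1 i) => ->.
  by [].
move=> v.
case: (eqVneq y 0) => [->|y0]; first by rewrite mul0mx.
have Hroot : root (char_poly Mc) l.
  by rewrite -eigenvalue_root_char; apply/eigenvalueP; exists y => //; apply/eigenspaceP.
have [m [q qn0 Ep]] := multiplicity_XsubC (char_poly Mc) l.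
have p0 : char_poly Mc != 0 by apply: monic_neq0; apply: char_poly_monic.
rewrite p0 /= in qn0.
have q0 : q != 0 by apply: contraNneq qn0 => ->; rewrite root0.
set hq := horner_mx Mc q.
set vl := hq *m v.
have yq : y *m hq = q.[l] *: y by apply: left_eig_horner.
have Eh : horner_mx Mc (('X - l%:P) ^+ m) = (Mc - l%:M) ^+ m.
  by rewrite rmorphXn rmorphB /= horner_mx_X horner_mx_C.
have Hm : (Mc - l%:M) ^+ m *m vl = 0.
  rewrite -Eh /vl mulmxA mulmxE -rmorphM [_ * q]mulrC -Ep.
  rewrite /= (_ : horner_mx _ _ = 0) ?mul0mx //; exact: Cayley_Hamilton.
have mN : (m <= N)%N.
  have := size_char_poly Mc; rewrite Ep size_Mmonic ?monic_exp ?monicXsubC // size_exp_XsubC.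
  have := size_poly_gt0 q; rewrite q0 => sq E.
  lia.
have HN : (Mc - l%:M) ^+ N *m vl = 0.
  have -> : (Mc - l%:M) ^+ N = (Mc - l%:M) ^+ (N - m) * (Mc - l%:M) ^+ m by rewrite -exprD subnK.
  by rewrite -mulmxE -mulmxA Hm mulmx0.
have yvl : y *m vl = 0.
  case: (ltrgtP 0 (complex.Im l)) => [Hpos|Hneg|H0].
  - have [c ->] : exists c, vl = B *m c.
      apply: HWB; exists [:: (l, vl)]; split; last by rewrite big_seq1.
      by move=> p; rewrite inE => /eqP -> /=.
    by rewrite mulmxA yB mul0mx.
  - have [c Ec] : exists c, map_mx (@conjc R) vl = B *m c.
      apply: HWB; exists [:: ((l^*)%C, map_mx (@conjc R) vl)]; split; last by rewrite big_seq1.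
      move=> p; rewrite inE => /eqP -> /=; split.
        by move: Hneg; case: (l) => x1 x2 /=; rewrite oppr_gt0.
      rewrite -{1}Mc_real -(map_scalar_mx (@conjc R)) -map_mxB -map_mxXn -map_mxM HN.
      by rewrite map_mx0.
    have -> : vl = Bc *m map_mx (@conjc R) c by rewrite -[vl]conjK_mx Ec map_mxM.
    by rewrite mulmxA yBc mul0mx.
  - have El : l = (alpha%:C)%C by apply: Hreal => //; rewrite H0.
    have m1 : (m <= 1)%N.
      rewrite leqNgt; apply/negP => m2; move: Hs; apply/negP; rewrite negbK Ep -El.
      by apply: dvdp_mull; apply: dvdp_exp2l m2.
    have Hev : Mc *m vl = (alpha%:C)%C *: vl.
      have [m0|m1'] : m = 0%N \/ m = 1%N by lia.
        by move: Hm; rewrite m0 expr0 mul1mx => ->; rewrite mulmx0 scaler0.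
      by move/eqP: Hm; rewrite m1'; rewrite expr1 mulmxBl mul_scalar_mx subr_eq0 El => /eqP.
    have [s ->] := right_eig Hev.
    by rewrite -scalemxAr yac scaler0.
move: yvl; rewrite /vl mulmxA yq -scalemxAl => /eqP.
by rewrite scaler_eq0 -rootE (negbTE qn0) /= => /eqP.
Qed.

Lemma x_zero (x : 'rV[R[i]]_N) : x *m ac = 0 -> x *m B = 0 -> x *m Bc = 0 -> x = 0.
Proof.
move=> xa xB xBc.
set Q := row_mx ac (row_mx B Bc).
set K := kermx Q.
have HK : forall k (y : 'M[R[i]]_(k, N)), (y <= K)%MS ->
    [/\ y *m ac = 0, y *m B = 0 & y *m Bc = 0].
  move=> k y; rewrite sub_kermx !mul_mx_row !row_mx_eq0 => /and3P [/eqP -> /eqP -> /eqP ->].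
  by [].
have xK : (x <= K)%MS by rewrite sub_kermx !mul_mx_row xa xB xBc !row_mx0.
have stab : (K *m Mc <= K)%MS.
  have [Ka KB KBc] := HK _ K (submx_refl K).
  rewrite sub_kermx -mulmxA !mul_mx_row Mc_ac HMB Mc_Bc -scalemxAr !mulmxA Ka KB KBc.
  by rewrite scaler0 !mul0mx !row_mx0.
case: (eqVneq x 0) => // x0; exfalso.
have rK : \rank K != 0%N.
  rewrite mxrank_eq0; apply: contraNneq x0 => K0.
  by move: xK; rewrite K0 submx0.
have [l Hl] : exists l, root (char_poly (restrict K Mc)) l.
  by apply/closed_rootP; rewrite size_char_poly eqSS.
rewrite -eigenvalue_root_char in Hl.
move/eigenvalueP: Hl => [w Hw w0].
move/eigenspaceP: Hw; rewrite (eigenspace_restrict stab) => Hw.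
set y := w *m row_base K.
have y0 : y != 0 by rewrite mul_mx_rowfree_eq0 ?row_base_free.
have yK : (y <= K)%MS.
  by apply: submx_trans (submxMl _ _) _; rewrite eq_row_base.
have Hy : y *m Mc = l *: y by apply/eigenspaceP.
have [ya yB yBc] := HK _ _ yK.
by move: y0; rewrite (y_zero Hy ya yB yBc) eqxx.
Qed.

Lemma d_zero (d : 'rV[int]_N) :
  map_mx (fun x : int => x%:~R : R) d *m a = 0 ->
  map_mx (fun x : int => x%:~R : R[i]) d *m B = 0 -> d = 0.
Proof.
move=> Hda HdB.
set x := map_mx (fun x : int => x%:~R : R[i]) d.
have xr : map_mx (@conjc R) x = x by apply/matrixP => i j; rewrite !mxE rmorph_int.
have xa : x *m ac = 0.
  have -> : x = map_mx (real_complex R) (map_mx (fun x : int => x%:~R : R) d).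
    by apply/matrixP => i j; rewrite !mxE rmorph_int.
  by rewrite -map_mxM Hda map_mx0.
have xBc : x *m Bc = 0 by rewrite -xr -map_mxM HdB map_mx0.
have := x_zero xa HdB xBc => /matrixP H.
apply/matrixP => i j; have := H i j; rewrite !mxE.
by move/eqP; rewrite intr_eq0 => /eqP.
Qed.

End Spec.


Lemma Rm_unit (R : realType) (n : nat) (M : 'M[int]_(Ndim n))
  (B : 'M[R[i]]_(Ndim n, n)) (Rm : 'M[R[i]]_n) :
  \det M = 1 -> \rank B = n ->
  map_mx (fun x : int => x%:~R : R[i]) M *m B = B *m Rm -> Rm^T \in unitmx.
Proof.
move=> hdet hr HMB.
set Mc := map_mx (fun x : int => x%:~R : R[i]) M.
have Mu : Mc^T \in unitmx.
  rewrite unitmx_tr unitmxE.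
  have -> : \det Mc = ((\det M)%:~R : R[i]) by rewrite -det_map_mx.
  by rewrite hdet unitr1.
rewrite -row_free_unit /row_free; apply/eqP/anti_leq; rewrite rank_leq_row /=.
have E : \rank (Rm^T *m B^T) = n.
  by rewrite -trmx_mul -HMB trmx_mul mxrankMfree ?row_free_unit // mxrank_tr.
by apply: (leq_trans _ (mxrankM_maxl Rm^T B^T)); rewrite E.
Qed.

Theorem corollary2p5 (R : realType) (n : nat) (M : 'M[int]_(Ndim n))
  (alpha : R) (a : 'cV[R]_(Ndim n)) (B : 'M[R[i]]_(Ndim n, n))
  (Rm : 'M[R[i]]_n) :
  (0 < n)%N ->
  \det M = 1 ->
  let Mc := map_mx (fun x : int => x%:~R : R[i]) M in
  (* alpha is the unique real eigenvalue, positive, /= 1, simple *)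
  0 < alpha -> alpha != 1 ->
  root (char_poly Mc) (alpha%:C)%C ->
  ~~ ((('X - ((alpha%:C)%C)%:P) ^+ 2) %| char_poly Mc) ->
  (forall l : R[i], root (char_poly Mc) l -> complex.Im l = 0 -> l = (alpha%:C)%C) ->
  (* a is a real eigenvector for alpha *)
  a != 0 ->
  map_mx (fun x : int => x%:~R : R) M *m a = alpha *: a ->
  (* the columns b_1, ..., b_n of B form a basis of W *)
  (forall j : 'I_n, inW Mc (col j B)) ->
  \rank B = n ->
  (forall v, inW Mc v -> exists c : 'cV[R[i]]_n, v = B *m c) ->
  (* M b_j = sum_l r_{lj} b_l *)
  Mc *m B = B *m Rm ->
  forall u v : word n,
    (forall p : point R n, 0 < complex.Im p.1 ->
       word_act alpha Rm a B u p = word_act alpha Rm a B v p)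
    <-> pres_eq M u v.
Proof.
move=> hn hdet Mc ha0 ha1 Hroot Hs Hreal Ha Hma _ hrB HWB HMB u v.
have Ha0 : alpha != 0 by rewrite gt_eqF.
have HU := Rm_unit hdet hrB HMB.
split; last first.
  by move=> Huv p _; apply: (sound Ha0 HU Hma HMB Huv).
move=> Hact.
have [p1 [t1 [q1 Hu]]] := nf_exists M u.
have [p2 [t2 [q2 Hv]]] := nf_exists M v.
have Hu2 := pe_trans' Hu (nf_shiftk M p2 p1 t1 q1).
have Hv2 := pe_trans' Hv (nf_shiftk M p1 p2 t2 q2).
rewrite (addnC p2 p1) in Hv2.
set P := (p1 + p2)%N in Hu2 Hv2.
set T1 := t1 *m M ^+ p2 in Hu2; set T2 := t2 *m M ^+ p1 in Hv2.
set Q1 := (q1 + p2)%N in Hu2; set Q2 := (q2 + p1)%N in Hv2.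
pose pt : point R n := (('i)%C, 0).
have Hpt : 0 < complex.Im pt.1 by rewrite /= ltr01.
have E := Hact pt Hpt.
rewrite (sound Ha0 HU Hma HMB Hu2) (sound Ha0 HU Hma HMB Hv2) in E.
have key : forall T Q, word_act alpha Rm a B (nseq P (G0 n)) (word_act alpha Rm a B (NF P T Q) pt) =
    ((alpha ^+ Q)%:C%C * 'i%C + tr1 a T, tr2 B T).
  move=> T Q; rewrite -act_cat.
  have H : pres_eq M (nseq P (G0 n) ++ NF P T Q) (tnf T ++ nseq Q (G0 n)).
    rewrite /NF catA; have := pe_cat (nseq_inv M P) (pres_refl M (tnf T ++ nseq Q (G0 n))).
    by [].
  rewrite (sound Ha0 HU Hma HMB H) act_cat act_G0n act_tw ?istw_tnf // wvec_tnf /=.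
  by rewrite mulmx0 add0r rmorphXn.
have E2 := congr1 (word_act alpha Rm a B (nseq P (G0 n))) E.
rewrite !key in E2.
case: E2 => E1 Eim Etr2.
have EQ : Q1 = Q2.
  move: Eim; rewrite !mulr1 !mulr0 !addr0.
  exact: (ieexprIn ha0 ha1).
move: E1; rewrite !mulr0 !mul0r subr0 !add0r => Etr1.
have ET : T1 = T2.
  apply/eqP; rewrite -subr_eq0; apply/eqP; apply: (d_zero Hs Hreal Ha Hma HWB HMB).
    rewrite map_mxB mulmxBl; apply/matrixP => i j; rewrite (ord1 i) (ord1 j) [in RHS]mxE.
    rewrite mxE [X in _ + X]mxE; apply/eqP; rewrite subr_eq0; apply/eqP; exact: Etr1.
  rewrite map_mxB mulmxBl; apply/eqP; rewrite subr_eq0; apply/eqP.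
  by apply: trmx_inj.
apply: pe_trans' Hu2 _; rewrite EQ ET; exact: pres_sym.
Qed.
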